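(* Let $a, r \in \mathbb{R}$ with $a > r > 0$, and let $\digamma$ be the anchor ring in $\mathbb{E}^{3}$ parametrized by $\boldsymbol{x}(t,\varphi) = \big((a + r\cos t)\cos\varphi,\ (a + r\cos t)\sin\varphi,\ r\sin t\big)$. Then the Gauss map $\boldsymbol{n}$ of $\digamma$ is of infinite type with respect to the first fundamental form; that is, there is no integer $m \geq 1$ and no real numbers $c_{1}, \dots, c_{m}$ such that $(\Delta^{I})^{m}\boldsymbol{n} + c_{1}(\Delta^{I})^{m-1}\boldsymbol{n} + \cdots + c_{m-1}\Delta^{I}\boldsymbol{n} + c_{m}\boldsymbol{n} = \mathbf{0}$.
   Context: An anchor ring is a tube in $\mathbb{E}^3$ of constant radius $r$ around a plane circle (or an open portion of a plane circle) of radius $a>r$. With $\gamma = a + r\cos t$, its first fundamental form is $I = r^{2}dt^{2} + \gamma^{2}d\varphi^{2}$, and its Gauss map is $\boldsymbol{n} = (-\cos t\cos\varphi, -\cos t\sin\varphi, -\sin t)$. For a surface with first fundamental form $I = g_{ij}du^{i}du^{j}$, the Beltrami–Laplace operator is $\Delta^{I} f = -\frac{1}{\sqrt{g}}\big(\sqrt{g}\, g^{ij} f_{i}\big)_{j}$, where $g = \det(g_{ij})$ and $(g^{ij})$ is the inverse of $(g_{ij})$; for the anchor ring this is $\Delta^{I} = -\frac{1}{\gamma^{2}}\frac{\partial^{2}}{\partial\varphi^{2}} + \frac{\sin t}{r\gamma}\frac{\partial}{\partial t} - \frac{1}{r^{2}}\frac{\partial^{2}}{\partial t^{2}}$, applied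 componentwise to vector-valued maps. A vector-valued map $\boldsymbol{n}$ on the surface is of finite type if $\boldsymbol{n} = \boldsymbol{c} + \sum_{i=1}^{k}\boldsymbol{n}_{i}$ for a constant vector $\boldsymbol{c}$ and finitely many nonconstant eigenvectors $\boldsymbol{n}_i$ of $\Delta^{I}$; otherwise it is of infinite type. The paper uses the criterion that finite type implies a relation of the form $(\Delta^{I})^{m}\boldsymbol{n} + c_{1}(\Delta^{I})^{m-1}\boldsymbol{n} + \cdots + c_{m}\boldsymbol{n} = \mathbf{0}$. *)

(* Defs.v *)
From Stdlib Require Import Reals.
From Coquelicot Require Import Coquelicot.
Open Scope R_scope.

Definition gam (a r t : R) : R := a + r * cos t.

(* Beltrami-Laplace operator of the first fundamental form
   I = r^2 dt^2 + gamma^2 dphi^2 of the anchor ring, acting on a scalar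
   function f(t, phi):
   Delta f = -1/gamma^2 f_phiphi + sin t/(r gamma) f_t - 1/r^2 f_tt. *)
Definition DeltaI (a r : R) (f : R -> R -> R) : R -> R -> R :=
  fun t p =>
    - / (gam a r t ^ 2) * Derive (fun q => Derive (fun q' => f t q') q) p
    + sin t / (r * gam a r t) * Derive (fun s => f s p) t
    - / (r ^ 2) * Derive (fun s => Derive (fun s' => f s' p) s) t.

Fixpoint DeltaI_iter (a r : R) (k : nat) (f : R -> R -> R) : R -> R -> R :=
  match k with
  | O => f
  | S k' => DeltaI a r (DeltaI_iter a r k' f)
  end.

Definition gauss_n (i : nat) : R -> R -> R :=
  fun t p =>
    match i with
    | O => - (cos t * cos p)
    | 1%nat => - (cos t * sin p)
    | _ => - sin t
    end.

Definition finite_type_lhs (a r : R) (m : nat) (c : nat -> R) (i : nat) (t p : R) : R :=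
  DeltaI_iter a r m (gauss_n i) t p
  + sum_f 1 m (fun j => c j * DeltaI_iter a r (m - j) (gauss_n i) t p).

(* Main.v *)
Require Import Defs.
From Stdlib Require Import Reals Lra Lia Psatz List FunctionalExtensionality.
From Coquelicot Require Import Coquelicot.
Import ListNotations.
Open Scope R_scope.

Lemma dmul (f g : R -> R) (x df dg : R) : is_derive f x df -> is_derive g x dg ->
  is_derive (fun t => f t * g t) x (df * g x + f x * dg).
Proof. intros H1 H2. apply (is_derive_mult f g x df dg H1 H2). intros; apply Rmult_comm. Qed.
Lemma dcomp (f g : R -> R) (x df dg : R) : is_derive f (g x) df -> is_derive g x dg ->
  is_derive (fun t => f (g t)) x (dg * df).
Proof. intros H1 H2. apply (is_derive_comp f g x df dg H1 H2). Qed.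
Lemma dval (f : R -> R) (x d dd : R) : is_derive f x d -> d = dd -> is_derive f x dd.
Proof. intros H ->; exact H. Qed.

Fixpoint peval (l : list R) (x : R) : R :=
  match l with nil => 0 | c :: l' => c + x * peval l' x end.
Fixpoint padd (l1 l2 : list R) : list R :=
  match l1, l2 with
  | nil, _ => l2 | _, nil => l1 | c1 :: t1, c2 :: t2 => (c1 + c2) :: padd t1 t2 end.
Definition pscale (k : R) (l : list R) := map (fun c => k * c) l.
Fixpoint pmul (l1 l2 : list R) : list R :=
  match l1 with nil => nil | c :: t => padd (pscale c l2) (0 :: pmul t l2) end.
Fixpoint pderiv (l : list R) : list R :=
  match l with nil => nil | c :: t => padd t (0 :: pderiv t) end.

Lemma peval_add l1 l2 x : peval (padd l1 l2) x = peval l1 x + peval l2 x.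
Proof. revert l2; induction l1 as [|c t IH]; intros [|c2 t2]; simpl; try ring.
  rewrite IH; ring. Qed.
Lemma peval_scale k l x : peval (pscale k l) x = k * peval l x.
Proof. induction l as [|c t IH]; simpl; [ring|]. rewrite IH; ring. Qed.
Lemma peval_mul l1 l2 x : peval (pmul l1 l2) x = peval l1 x * peval l2 x.
Proof. induction l1 as [|c t IH]; simpl; [ring|].
  rewrite peval_add, peval_scale; simpl. rewrite IH; ring. Qed.
Lemma peval_deriv l x : is_derive (peval l) x (peval (pderiv l) x).
Proof. induction l as [|c t IH]; simpl.
  - apply (dval _ _ _ _ (is_derive_const 0 x)). reflexivity.
  - rewrite peval_add. simpl.
    eapply dval.
    + apply (is_derive_plus (fun _ => c) (fun y => y * peval t y)).
      apply is_derive_const. apply dmul. apply is_derive_id. apply IH.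
    + simpl. unfold plus, zero, one; simpl. ring.
Qed.

Lemma pvanish_c (c : R) (l : list R) B :
  (forall x, -1 <= x <= 1 -> Rabs (peval l x) <= B) ->
  (forall x, 0 < x < 1 -> c + x * peval l x = 0) -> c = 0.
Proof.
  intros HB H. destruct (Req_dec c 0) as [|Hc]; [assumption|exfalso].
  assert (Bp : 0 <= B) by (specialize (HB 0); apply Rle_trans with (2 := HB ltac:(lra)); apply Rabs_pos).
  assert (Hca : 0 < Rabs c) by (apply Rabs_pos_lt; exact Hc).
  set (x := Rmin (1/2) (Rabs c / (2 * (B + 1)))).
  assert (Hx1 : x <= 1/2) by apply Rmin_l.
  assert (Hx2 : x <= Rabs c / (2 * (B + 1))) by apply Rmin_r.
  assert (Hx0 : 0 < x). { unfold x, Rmin. destruct Rle_dec. lra. apply Rdiv_lt_0_compat; lra. }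
  specialize (H x ltac:(lra)). specialize (HB x ltac:(lra)).
  assert (E : c = - (x * peval l x)) by lra.
  rewrite E, Rabs_Ropp, Rabs_mult, (Rabs_right x) in Hca by lra.
  rewrite E, Rabs_Ropp, Rabs_mult, (Rabs_right x) in Hx2 by lra.
  assert (x * Rabs (peval l x) <= x * B) by (apply Rmult_le_compat_l; lra).
  assert (x * (2 * (B+1)) <= x * Rabs (peval l x)).
  { apply Rmult_le_reg_r with (/ (2*(B+1))). apply Rinv_0_lt_compat; lra.
    rewrite Rmult_assoc, Rinv_r by lra. unfold Rdiv in Hx2. lra. }
  nra.
Qed.

Fixpoint babs (l : list R) : R := match l with nil => 0 | c :: t => Rabs c + babs t end.
Lemma babs_bound l x : -1 <= x <= 1 -> Rabs (peval l x) <= babs l.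
Proof. intros Hx. induction l as [|c t IH]; simpl. rewrite Rabs_R0; lra.
  eapply Rle_trans. apply Rabs_triang. rewrite Rabs_mult.
  assert (Rabs x <= 1) by (apply Rabs_le; lra).
  assert (0 <= Rabs (peval t x)) by apply Rabs_pos.
  nra. Qed.

Lemma pvanish l : (forall x, 0 < x < 1 -> peval l x = 0) -> forall y, peval l y = 0.
Proof.
  induction l as [|c t IH]; simpl; intros H y; [reflexivity|].
  assert (Hc : c = 0) by (apply (pvanish_c c t (babs t)); [apply babs_bound | exact H]).
  subst c. rewrite IH. ring. intros x Hx. specialize (H x Hx).
  assert (x * peval t x = 0) by lra. apply Rmult_integral in H0. lra.
Qed.
Lemma dext (f g : R -> R) (x l : R) : (forall s : R, f s = g s) -> is_derive f x l -> is_derive g x l.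
Proof. intros; eapply is_derive_ext; eauto. Qed.
Section S.
Variables (a r : R) (Hr : 0 < r) (Har : r < a).

Lemma gam_pos t : 0 < gam a r t.
Proof. unfold gam. pose proof (COS_bound t). nra. Qed.

Definition Hf (k : nat) (t : R) := (/ gam a r t) ^ k.

Lemma H_step k t : Hf k t = gam a r t * Hf (S k) t.
Proof. unfold Hf. simpl. pose proof (gam_pos t). field_simplify; [reflexivity| lra]. Qed.

Lemma d_inv (t : R) : is_derive (fun s => / gam a r s) t (r * sin t * Hf 2 t).
Proof. pose proof (gam_pos t). unfold Hf, gam in *. auto_derive. intro E; lra. simpl. field. lra. Qed.

Lemma dH k (t : R) : is_derive (Hf k) t (INR k * r * sin t * Hf (S k) t).
Proof.
  induction k as [|k IH].
  - eapply dval. apply (dext (fun _ => 1)). intros; reflexivity. apply is_derive_const.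
    simpl. unfold zero; simpl; ring.
  - eapply dval. apply (dext (fun s => / gam a r s * Hf k s)).
    intros; reflexivity. apply dmul. apply d_inv. apply IH.
    rewrite S_INR. unfold Hf. simpl. ring.
Qed.

Definition g := [a; r].
Lemma peval_g x : peval g x = a + r * x.
Proof. simpl. ring. Qed.

Definition pE (j : nat) (P : list R) :=
  padd (pscale (-1) (pmul (pderiv P) g)) (pscale (INR j * r) P).
Definition pO (j : nat) (P : list R) :=
  padd (pmul (pmul [0;1] P) g) (pmul [1;0;-1] (pE j P)).

Lemma peval_pE j P x : peval (pE j P) x = - (peval (pderiv P) x * (a + r * x)) + INR j * r * peval P x.
Proof. unfold pE. rewrite peval_add, !peval_scale, peval_mul, peval_g. ring. Qed.
Lemma peval_pO j P x : peval (pO j P) x = x * peval P x * (a + r * x) + (1 - x * x) * peval (pE j P) x.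
Proof. unfold pO. rewrite peval_add, !peval_mul, peval_g. simpl. ring. Qed.

Lemma dE j P (t : R) : is_derive (fun s => peval P (cos s) * Hf j s) t
   (sin t * peval (pE j P) (cos t) * Hf (S j) t).
Proof.
  eapply dval. apply dmul. apply (dcomp (peval P) cos). apply peval_deriv. apply is_derive_cos.
  apply dH. rewrite peval_pE, (H_step j t). unfold gam. ring.
Qed.

Lemma dO j P (t : R) : is_derive (fun s => sin s * peval P (cos s) * Hf j s) t
   (peval (pO j P) (cos t) * Hf (S j) t).
Proof.
  eapply dval. apply (dext (fun s => sin s * (peval P (cos s) * Hf j s))).
  intros; ring. apply dmul. apply is_derive_sin. apply dE.
  rewrite peval_pO, (H_step j t). unfold gam.
  assert (Hs : sin t * sin t = 1 - cos t * cos t) by (pose proof (sin2 t); unfold Rsqr in *; lra).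
  replace (sin t * (sin t * peval (pE j P) (cos t) * Hf (S j) t)) with
    ((sin t * sin t) * peval (pE j P) (cos t) * Hf (S j) t) by ring.
  rewrite Hs. ring.
Qed.

Definition Fn (N : list R) (k : nat) (t : R) := sin t * peval N (cos t) * Hf k t.

Definition Mop (k : nat) (N : list R) :=
  padd (pscale (/ r) (pO k N)) (pscale (- / (r ^ 2)) (pE (S k) (pO k N))).

Lemma DeltaI_F N k (t p : R) :
  DeltaI a r (fun s _ => Fn N k s) t p = Fn (Mop k N) (S (S k)) t.
Proof.
  unfold DeltaI.
  rewrite (Derive_ext (fun q => Derive (fun _ => Fn N k t) q) (fun _ => 0)) by (intros; apply Derive_const).
  rewrite Derive_const.
  assert (E1 : Derive (fun s : R => Fn N k s) t = peval (pO k N) (cos t) * Hf (S k) t)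
    by (apply is_derive_unique; apply dO).
  rewrite E1.
  rewrite (Derive_ext (fun s => Derive (fun s' => Fn N k s') s)
             (fun s => peval (pO k N) (cos s) * Hf (S k) s))
    by (intros; apply is_derive_unique; apply dO).
  assert (E2 : Derive (fun s : R => peval (pO k N) (cos s) * Hf (S k) s) t =
    sin t * peval (pE (S k) (pO k N)) (cos t) * Hf (S (S k)) t)
    by (apply is_derive_unique; apply dE).
  rewrite E2.
  unfold Fn, Mop. rewrite peval_add, !peval_scale.
  rewrite (H_step (S k) t). pose proof (gam_pos t). field. lra.
Qed.
End S.
Section T.
Variables (a r : R) (Hr : 0 < r) (Har : r < a).

Definition A1 := [- a / r ^ 2; - 2 / r].

Fixpoint NNs (j : nat) : list R :=
  match j with O => A1 | S j' => Mop a r (2 * j' + 1) (NNs j') end.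

Lemma Hf_pos k t : 0 < Hf a r k t.
Proof. unfold Hf. apply pow_lt. apply Rinv_0_lt_compat. apply gam_pos; lra. Qed.

Lemma iter0 : DeltaI_iter a r 0 (gauss_n 2) = fun t p => Fn a r [-1] 0 t.
Proof. apply functional_extensionality; intro t; apply functional_extensionality; intro p.
  unfold Fn, Hf. simpl. ring. Qed.

Lemma iter_form j : DeltaI_iter a r (S j) (gauss_n 2) = fun t p => Fn a r (NNs j) (2 * j + 1) t.
Proof.
  induction j as [|j IH].
  - change (DeltaI a r (DeltaI_iter a r 0 (gauss_n 2)) = fun t p => Fn a r A1 1 t).
    rewrite iter0. apply functional_extensionality; intro t; apply functional_extensionality; intro p.
    rewrite DeltaI_F by assumption. unfold Fn. rewrite (H_step a r Hr Har 1 t).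
    unfold Mop, pE, pO, g, A1, gam. simpl. field. lra.
  - change (DeltaI a r (DeltaI_iter a r (S j) (gauss_n 2)) = fun t p => Fn a r (NNs (S j)) (2 * S j + 1) t).
    rewrite IH. apply functional_extensionality; intro t; apply functional_extensionality; intro p.
    rewrite DeltaI_F by assumption. simpl NNs. f_equal. lia.
Qed.

Definition x0 := - a / r.
Lemma gx0 : a + r * x0 = 0.
Proof. unfold x0. field. lra. Qed.

Lemma Mop_x0 k N : peval (Mop a r k N) x0 = - (INR k) ^ 2 * (1 - x0 * x0) * peval N x0.
Proof.
  unfold Mop. rewrite peval_add, !peval_scale, peval_pE, peval_pO, peval_pE, gx0, S_INR.
  field. lra.
Qed.

Lemma NNs_x0 j : peval (NNs j) x0 <> 0.
Proof.
  induction j as [|j IH]; simpl NNs.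
  - unfold A1, x0; simpl. intro E. field_simplify in E; [|lra].
    assert (a / r ^ 2 = 0) by (rewrite <- E; field; lra).
    assert (0 < a / r ^ 2) by (apply Rdiv_lt_0_compat; [lra | apply pow_lt; lra]). lra.
  - rewrite Mop_x0. assert (0 < INR (2 * j + 1)) by (apply lt_0_INR; lia).
    assert (1 - x0 * x0 < 0).
    { unfold x0. assert (a / r > 1). { apply Rmult_lt_reg_r with r; auto. unfold Rdiv.
        rewrite Rmult_assoc, Rinv_l by lra. lra. }
      unfold Rdiv in *. replace (- a * / r) with (- (a * / r)) by ring. nra. }
    intro E. apply Rmult_integral in E. destruct E as [E|E]; [|exact (IH E)].
    apply Rmult_integral in E. destruct E as [E|E]; [|lra].
    replace (j + (j + 0) + 1)%nat with (2 * j + 1)%nat in E by lia.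
    assert (0 < INR (2 * j + 1) ^ 2) by (apply pow_lt; lra). lra.
Qed.
End T.
Definition IsPoly (f : R -> R) := exists l, forall x, f x = peval l x.
Lemma isp_const c : IsPoly (fun _ => c).
Proof. exists [c]. intros; simpl; ring. Qed.
Lemma isp_peval l : IsPoly (peval l).
Proof. exists l; reflexivity. Qed.
Lemma isp_add f h : IsPoly f -> IsPoly h -> IsPoly (fun x => f x + h x).
Proof. intros [l1 H1] [l2 H2]. exists (padd l1 l2). intros; rewrite peval_add, H1, H2; reflexivity. Qed.
Lemma isp_mul f h : IsPoly f -> IsPoly h -> IsPoly (fun x => f x * h x).
Proof. intros [l1 H1] [l2 H2]. exists (pmul l1 l2). intros; rewrite peval_mul, H1, H2; reflexivity. Qed.
Lemma isp_pow f n : IsPoly f -> IsPoly (fun x => f x ^ n).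
Proof. intros Hf. induction n as [|n IH]; simpl. apply isp_const. apply isp_mul; auto. Qed.
Lemma isp_sum (F : nat -> R -> R) n : (forall i, IsPoly (F i)) -> IsPoly (fun x => sum_f_R0 (fun i => F i x) n).
Proof. intros H. induction n as [|n IH]; simpl. apply H. apply isp_add; auto. Qed.
Lemma isp_ext f h : IsPoly f -> (forall x, f x = h x) -> IsPoly h.
Proof. intros [l Hl] E. exists l. intros; rewrite <- E; auto. Qed.

Section U.
Variables (a r : R) (Hr : 0 < r) (Har : r < a).

Definition Nk (k : nat) := match k with O => [-1] | S j => NNs a r j end.
Definition ek (k : nat) := match k with O => O | S j => (2 * j + 1)%nat end.

Lemma iter_all k t p : DeltaI_iter a r k (gauss_n 2) t p = Fn a r (Nk k) (ek k) t.
Proof. destruct k as [|j]. rewrite iter0; reflexivity. rewrite iter_form by assumption; reflexivity. Qed.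

Lemma Hf_split e E t : (e <= E)%nat -> Hf a r e t = Hf a r E t * gam a r t ^ (E - e).
Proof. intros Hle. unfold Hf. replace E with (e + (E - e))%nat at 1 by lia.
  rewrite pow_add, Rmult_assoc, <- Rpow_mult_distr, Rinv_l, pow1. ring.
  pose proof (gam_pos a r Hr Har t). lra. Qed.

Lemma ek_le m k : (1 <= m)%nat -> (k <= m)%nat -> (ek k <= ek m)%nat.
Proof. intros. destruct k; destruct m; simpl; lia. Qed.
Lemma ek_lt m j : (1 <= m)%nat -> (1 <= j <= m)%nat -> (ek (m - j) < ek m)%nat.
Proof. intros. destruct (m - j)%nat eqn:E; destruct m; simpl; lia. Qed.

Definition Tfun (m : nat) (c : nat -> R) (x : R) :=
  peval (Nk m) x + sum_f 1 m (fun j => c j * (peval (Nk (m - j)) x * (a + r * x) ^ (ek m - ek (m - j)))).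

Lemma lhs_T m c t p : (1 <= m)%nat ->
  finite_type_lhs a r m c 2 t p = sin t * Hf a r (ek m) t * Tfun m c (cos t).
Proof.
  intros Hm. unfold finite_type_lhs, Tfun, sum_f. rewrite iter_all.
  rewrite Rmult_plus_distr_l, scal_sum. unfold Fn. f_equal. ring.
  apply sum_eq. intros i Hi. rewrite iter_all. unfold Fn.
  rewrite (Hf_split (ek (m - (i + 1))) (ek m)). unfold gam. ring.
  apply ek_le; lia.
Qed.

Lemma T_poly m c : IsPoly (Tfun m c).
Proof.
  unfold Tfun, sum_f. apply isp_add. apply isp_peval.
  apply isp_sum. intros i. apply isp_mul. apply isp_const. apply isp_mul. apply isp_peval.
  apply isp_pow. apply (isp_ext (peval [a; r])). apply isp_peval. intros; simpl; ring.
Qed.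

Lemma T_x0 m c : (1 <= m)%nat -> Tfun m c (x0 a r) <> 0.
Proof.
  intros Hm. unfold Tfun, sum_f.
  rewrite (sum_eq _ (fun _ => 0)). rewrite sum_cte, Rmult_0_l, Rplus_0_r.
  destruct m as [|n]; [lia|]. simpl Nk. apply NNs_x0; assumption.
  intros i Hi. rewrite gx0 by lra. rewrite pow_i. ring. pose proof (ek_lt m (i + 1) Hm ltac:(lia)). lia.
Qed.
End U.

Theorem theorem1 (a r : R) (Hr : 0 < r) (Har : r < a) :
  ~ (exists (m : nat) (c : nat -> R) (phi0 phi1 : R),
       (1 <= m)%nat /\ phi0 < phi1 /\
       forall (i : nat) (t p : R), (i < 3)%nat -> phi0 < p < phi1 ->
         finite_type_lhs a r m c i t p = 0).
Proof.
  intros [m [c [phi0 [phi1 [Hm [Hphi H]]]]]].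
  destruct (T_poly a r m c) as [l Hl].
  apply (T_x0 a r Hr Har m c Hm). rewrite Hl. apply pvanish.
  intros x Hx. rewrite <- Hl.
  assert (Hx1 : -1 <= x <= 1) by lra.
  specialize (H 2%nat (acos x) ((phi0 + phi1) / 2) ltac:(lia) ltac:(lra)).
  rewrite lhs_T in H by assumption. rewrite cos_acos in H by assumption.
  rewrite sin_acos in H by assumption.
  assert (0 < sqrt (1 - x²)) by (apply sqrt_lt_R0; unfold Rsqr; nra).
  pose proof (Hf_pos a r Hr Har (ek m) (acos x)).
  apply Rmult_integral in H. destruct H as [H|H]; [|exact H].
  apply Rmult_integral in H. lra.
Qed.
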